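(* Let $a\neq0$ and $b\in\mathbb R$, and let $A\in\{X,Y\}$. Suppose $\psi,p$ satisfy $\dot\psi=A\psi$, $\dot p=-A^{\top}p$ for $t\ge0$ with reduced data $(\phi_1,\phi_2,\phi_3)(0)=(0,a,b)$, and let $\tau_A>0$ be the smallest positive zero of $\phi_1$. Then $(\phi_1,\phi_2,\phi_3)(\tau_A)=(0,-a,b)$, for both $A=X$ and $A=Y$. That is, the shortest switching-to-switching $X$-arc and the shortest switching-to-switching $Y$-arc induce the same map $(0,a,b)\mapsto(0,-a,b)$ on reduced data.
   Context: Fix $\gamma\in(0,\pi/2)$, $s=\sin\gamma$, $c=\cos\gamma$, and $X=\begin{pmatrix}0&s^2&sc\\-s^2&0&0\\-sc&0&0\end{pmatrix}$, $Y=\begin{pmatrix}0&1&0\\-1&0&0\\0&0&0\end{pmatrix}$. Let $F_1=X-Y$, $F_2=[X,Y]$, $F_3=[Y,[X,Y]]$ and define the reduced variables $\phi_i(t)=\langle p(t),F_i\psi(t)\rangle$, $i=1,2,3$, with the standard inner product on $\mathbb R^3$. *)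

(* Defs.v *)
From HB Require Import structures.
From mathcomp Require Import all_boot all_order all_algebra.
From mathcomp Require Import all_classical all_reals all_analysis.
Set Implicit Arguments. Unset Strict Implicit. Unset Printing Implicit Defensive.
Import Order.TTheory GRing.Theory Num.Theory.
Import numFieldNormedType.Exports.
Local Open Scope ring_scope.
Local Open Scope classical_set_scope.

Section Defs.
Variable R : realType.

Definition Xmat (g : R) : 'M[R]_3 :=
  \matrix_(i < 3, j < 3)
    (let s := sin g in let c := cos g in
     match nat_of_ord i, nat_of_ord j with
     | 0%N, 1%N => s ^+ 2
     | 0%N, 2%N => s * c
     | 1%N, 0%N => - s ^+ 2
     | 2%N, 0%N => - (s * c)
     | _, _ => 0
     end).

Definition Ymat : 'M[R]_3 :=
  \matrix_(i < 3, j < 3)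
    (match nat_of_ord i, nat_of_ord j with
     | 0%N, 1%N => 1
     | 1%N, 0%N => -1
     | _, _ => 0
     end).

Definition lie (M N : 'M[R]_3) : 'M[R]_3 := M *m N - N *m M.

Definition F1 (g : R) : 'M[R]_3 := Xmat g - Ymat.
Definition F2 (g : R) : 'M[R]_3 := lie (Xmat g) Ymat.
Definition F3 (g : R) : 'M[R]_3 := lie Ymat (lie (Xmat g) Ymat).

Definition dot3 (u v : 'cV[R]_3) : R := \sum_(i < 3) u i ord0 * v i ord0.

Definition phi (F : 'M[R]_3) (p psi : R -> 'cV[R]_3) (t : R) : R :=
  dot3 (p t) (F *m psi t).

End Defs.
Arguments Ymat {R}.

(* Main.v *)
Require Import Defs.
From HB Require Import structures.
From mathcomp Require Import all_boot all_order all_algebra.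
From mathcomp Require Import all_classical all_reals all_analysis.
Import Order.TTheory GRing.Theory Num.Theory.
Import numFieldNormedType.Exports.
Local Open Scope ring_scope.
Local Open Scope classical_set_scope.
From mathcomp Require Import ring lra.

Section Aux.
Variable R : realType.


Lemma comp_derive (f : R -> 'cV[R]_3) (t : R) (D : 'cV[R]_3) (i : 'I_3) :
  is_derive t 1 f D -> is_derive t 1 (fun x => f x i 0) (D i 0).
Proof.
move=> H.
have df : derivable f t 1 by case: H.
have dfi := (proj1 (derivable_mxP f t 1) df i 0).
have := derive_mx df.
rewrite (@derive_val _ _ _ _ _ _ _ H) => ->.
rewrite mxE.
exact: derivableP.
Qed.

Lemma dot3E (u v : 'cV[R]_3) : dot3 u v = (u^T *m v) 0 0.
Proof. by rewrite /dot3 !mxE; apply: eq_bigr => i _; rewrite mxE. Qed.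

Lemma phiE (F : 'M[R]_3) (u w : 'cV[R]_3) :
  dot3 u (F *m w) = \sum_(i < 3) \sum_(j < 3) F i j * (u i 0 * w j 0).
Proof.
rewrite /dot3; apply: eq_bigr => i _; rewrite mxE big_distrr /=.
by apply: eq_bigr => j _; rewrite mulrCA mulrA.
Qed.

Lemma lie_id (F A : 'M[R]_3) (u w : 'cV[R]_3) :
  dot3 u (F *m (A *m w)) + dot3 (- (A^T *m u)) (F *m w) = dot3 u (lie F A *m w).
Proof.
rewrite !dot3E /lie raddfN /= trmx_mul trmxK mulmxBl mulmxBr.
rewrite !mulNmx !mulmxA.
by rewrite !mxE.
Qed.

Lemma derive_phi (F A : 'M[R]_3) (p psi : R -> 'cV[R]_3) (t : R) :
  is_derive t 1 psi (A *m psi t) -> is_derive t 1 p (- (A^T *m p t)) ->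
  is_derive t 1 (phi F p psi) (phi (lie F A) p psi t).
Proof.
move=> hs hp.
have hs' j := comp_derive _ _ _ j hs.
have hp' i := comp_derive _ _ _ i hp.
have e : phi F p psi = (fun x => \sum_(i<3) \sum_(j<3) F i j * (p x i 0 * psi x j 0)).
  by apply: funext => x; rewrite /phi phiE.
rewrite e /phi -lie_id !phiE -big_split /=.
have Hij i j : is_derive t 1 (fun x => F i j * (p x i 0 * psi x j 0))
   (F i j * (p t i 0 * (A *m psi t) j 0) + F i j * ((-(A^T *m p t)) i 0 * psi t j 0)).
  have H := is_deriveZ (F i j) (is_deriveM (hp' i) (hs' j)).
  apply: (is_derive_eq H).
  by rewrite /GRing.scale /= -mulrDr [_ * psi t j 0]mulrC.
have Hi i : is_derive t 1 (fun x => \sum_(j<3) F i j * (p x i 0 * psi x j 0))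
   (\sum_(j<3) (F i j * (p t i 0 * (A *m psi t) j 0) + F i j * ((-(A^T *m p t)) i 0 * psi t j 0))).
  have H := is_derive_sum (Hij i).
  by rewrite fct_sumE in H.
have H := is_derive_sum Hi.
rewrite fct_sumE in H.
apply: (is_derive_eq H).
by apply: eq_bigr => i _; rewrite big_split.
Qed.


Lemma right_pos (f : R -> R) (x l : R) : f y @[y --> x^'+] --> l -> 0 < l ->
  exists2 d, 0 < d & forall y, x < y < x + d -> 0 < f y.
Proof.
move=> H l0.
have : nbhs x (fun y => x < y -> 0 < f y) by exact: (cvgr_gt _ H _ l0).
move=> /nbhs_ballP [e e0 He].
exists e => // y /andP[xy ye].
apply: He => //=.
rewrite /ball /= ltr_norml; apply/andP; split; lra.
Qed.

Lemma cont_itv (f : R -> R) (u v : R) : (forall t : R, 0 < t -> derivable f t 1) ->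
  f x @[x --> 0^'+] --> f 0 -> 0 <= u -> u < v -> {within `[u, v], continuous f}.
Proof.
move=> hd h0 u0 uv.
have ct t : 0 < t -> {for t, continuous f}.
  by move=> t0; apply/differentiable_continuous/derivable1_diffP/hd.
apply/(continuous_within_itvP _ uv); split.
- move=> t; rewrite in_itv /= => /andP[ut tv]; apply: ct; lra.
- case: (eqVneq u 0) => [->|un0] //.
  apply: cvg_at_right_filter; apply: ct.
  rewrite lt_neqAle eq_sym un0 u0 //.
- apply: cvg_at_left_filter; apply: ct; lra.
Qed.

Lemma const0 (Q : R -> R) (tau : R) : (forall t : R, 0 < t -> is_derive t 1 Q 0) ->
  Q x @[x --> 0^'+] --> Q 0 -> 0 < tau -> Q tau = Q 0.
Proof.
move=> hd h0 t0.
have := @MVT R Q (fun _ => 0) 0 tau t0.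
case.
- move=> x; rewrite in_itv /= => /andP[x0 _]; exact: hd.
- apply: cont_itv => // t tp; by case: (hd t tp).
move=> c _; rewrite mul0r => /eqP; rewrite subr_eq0 => /eqP //.
Qed.

Lemma sign_contra (f1 f2 : R -> R) (a tau : R) :
  (forall t : R, 0 < t -> is_derive t 1 f1 (f2 t)) ->
  (forall t : R, 0 < t -> derivable f2 t 1) ->
  f1 x @[x --> 0^'+] --> f1 0 -> f2 x @[x --> 0^'+] --> f2 0 ->
  f1 0 = 0 -> f2 0 = a -> a != 0 -> 0 < tau -> f1 tau = 0 -> f2 tau = a ->
  (forall t : R, 0 < t < tau -> f1 t != 0) -> False.
Proof.
move=> hd1 hd2 c1 c2 f10 f20 a0 tau0 f1t f2t hz.
have aa : 0 < a * a.
  by case: (ltrgtP a 0) a0 => // ha _; nra.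
have g0 : (fun x => a * f2 x) x @[x --> 0^'+] --> a * a.
  rewrite -f20; apply: cvgM => //; exact: cvg_cst.
have [d1 d10 Hd1] := right_pos _ _ _ g0 aa.
have ct2 : f2 x @[x --> tau] --> a.
  by rewrite -f2t; apply/differentiable_continuous/derivable1_diffP/hd2.
have gt : (fun x => a * f2 x) x @[x --> tau] --> a * a.
  apply: cvgM => //; exact: cvg_cst.
have : nbhs tau (fun y => 0 < a * f2 y) by exact: (cvgr_gt _ gt _ aa).
move=> /nbhs_ballP [d2 /= d20 Hd2].
pose t1 := Num.min (d1 / 2) (tau / 3).
pose t2 := tau - Num.min (d2 / 2) (tau / 2).
have t1p : 0 < t1 by rewrite lt_min; apply/andP; split; lra.
have t1d : t1 <= d1 / 2 by rewrite ge_min lexx.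
have t1t : t1 <= tau / 3 by rewrite ge_min lexx orbT.
have t2a : tau - d2 / 2 <= t2.
  rewrite /t2 lerD2l lerN2 ge_min lexx //.
have t2b : tau / 2 <= t2.
  rewrite /t2.
  have : Num.min (d2 / 2) (tau / 2) <= tau / 2 by rewrite ge_min lexx orbT.
  lra.
have t2c : t2 < tau.
  rewrite /t2.
  have : 0 < Num.min (d2 / 2) (tau / 2) by rewrite lt_min; apply/andP; split; lra.
  lra.
have [c hc e1] : exists2 c, c \in `]0, t1[%R & f1 t1 - f1 0 = f2 c * (t1 - 0).
  apply: (@MVT R f1 f2 0 t1 t1p).
  - move=> x; rewrite in_itv /= => /andP[x0 _]; exact: hd1.
  - by apply: cont_itv => // t tp; case: (hd1 t tp).
move: hc; rewrite in_itv /= => /andP[c0 ct1].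
have gc : 0 < a * f2 c by apply: Hd1; apply/andP; split; lra.
have A1 : 0 < a * f1 t1.
  move: e1; rewrite f10 !subr0 => ->; rewrite mulrA; exact: mulr_gt0.
have [c' hc' e2] : exists2 c, c \in `]t2, tau[%R & f1 tau - f1 t2 = f2 c * (tau - t2).
  apply: (@MVT R f1 f2 t2 tau t2c).
  - move=> x; rewrite in_itv /= => /andP[x0 _]; apply: hd1; lra.
  - by apply: cont_itv => // [t tp|]; [case: (hd1 t tp)| lra].
move: hc'; rewrite in_itv /= => /andP[c'0 c't].
have gc' : 0 < a * f2 c'.
  apply: Hd2; rewrite /ball /= ltr_norml; apply/andP; split; lra.
have A2 : a * f1 t2 < 0.
  have -> : f1 t2 = - (f2 c' * (tau - t2)) by rewrite -e2 f1t; ring.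
  rewrite mulrN mulrA oppr_lt0; apply: mulr_gt0 => //; lra.
have [z hz' ez] : exists2 z, z \in `[t1, t2]%R & f1 z = 0.
  apply: (@IVT R f1 t1 t2 0); first lra.
  - apply: cont_itv; [move=> t tp; by case: (hd1 t tp)|done|lra|lra].
  - case: (ltrgtP a 0) a0 => // ha _.
    + have h1 : f1 t1 < 0 by nra.
      have h2 : 0 < f1 t2 by nra.
      rewrite ge_min le_max; apply/andP; split; apply/orP; [left|right]; lra.
    + have h1 : 0 < f1 t1 by nra.
      have h2 : f1 t2 < 0 by nra.
      rewrite ge_min le_max; apply/andP; split; apply/orP; [right|left]; lra.
move: hz'; rewrite in_itv /= => /andP[z1 z2].
have : f1 z != 0 by apply: hz; apply/andP; split; lra.
by rewrite ez eqxx.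
Qed.


Definition o0 : 'I_3 := @Ordinal 3 0 isT.
Definition o1 : 'I_3 := @Ordinal 3 1 isT.
Definition o2 : 'I_3 := @Ordinal 3 2 isT.

Lemma mul3 (A B : 'M[R]_3) i j : (A *m B) i j =
  A i o0 * B o0 j + A i o1 * B o1 j + A i o2 * B o2 j.
Proof.
rewrite mxE !big_ord_recr big_ord0 /= add0r.
by congr (_ * _ + _ * _ + _ * _); congr (_ _ _); apply/val_inj.
Qed.

Lemma lieF1 (g : R) (A : 'M[R]_3) : (A = Xmat g \/ A = Ymat) -> lie (F1 g) A = F2 g.
Proof.
rewrite /F1 /F2 /lie => -[]->; rewrite mulmxBl mulmxBr.
  by rewrite opprB addrC addrA subrK.
by rewrite opprB addrA subrK.
Qed.

Lemma lieF2Y (g : R) : lie (F2 g) Ymat = - F3 g.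
Proof. by rewrite /F3 /lie opprB. Qed.


Definition mk3 (a00 a01 a02 a10 a11 a12 a20 a21 a22 : R) : 'M[R]_3 :=
  \matrix_(i < 3, j < 3)
    match nat_of_ord i, nat_of_ord j with
    | 0%N, 0%N => a00 | 0%N, 1%N => a01 | 0%N, _ => a02
    | 1%N, 0%N => a10 | 1%N, 1%N => a11 | 1%N, _ => a12
    | _, 0%N => a20 | _, 1%N => a21 | _, _ => a22
    end.

Ltac cases9 := apply/matrixP;
  case=> [[|[|[|?]]] ?] //; case=> [[|[|[|?]]] ?] //.

Lemma mulmk3 a00 a01 a02 a10 a11 a12 a20 a21 a22 b00 b01 b02 b10 b11 b12 b20 b21 b22 :
  mk3 a00 a01 a02 a10 a11 a12 a20 a21 a22 *m mk3 b00 b01 b02 b10 b11 b12 b20 b21 b22 =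
  mk3 (a00*b00 + a01*b10 + a02*b20) (a00*b01 + a01*b11 + a02*b21) (a00*b02 + a01*b12 + a02*b22)
      (a10*b00 + a11*b10 + a12*b20) (a10*b01 + a11*b11 + a12*b21) (a10*b02 + a11*b12 + a12*b22)
      (a20*b00 + a21*b10 + a22*b20) (a20*b01 + a21*b11 + a22*b21) (a20*b02 + a21*b12 + a22*b22).
Proof. by cases9; rewrite mul3 !mxE. Qed.

Lemma submk3 a00 a01 a02 a10 a11 a12 a20 a21 a22 b00 b01 b02 b10 b11 b12 b20 b21 b22 :
  mk3 a00 a01 a02 a10 a11 a12 a20 a21 a22 - mk3 b00 b01 b02 b10 b11 b12 b20 b21 b22 =
  mk3 (a00-b00) (a01-b01) (a02-b02) (a10-b10) (a11-b11) (a12-b12) (a20-b20) (a21-b21) (a22-b22).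
Proof. by cases9; rewrite !mxE. Qed.

Lemma sclmk3 k a00 a01 a02 a10 a11 a12 a20 a21 a22 :
  k *: mk3 a00 a01 a02 a10 a11 a12 a20 a21 a22 =
  mk3 (k*a00) (k*a01) (k*a02) (k*a10) (k*a11) (k*a12) (k*a20) (k*a21) (k*a22).
Proof. by cases9; rewrite !mxE. Qed.

Lemma eqmk3 a00 a01 a02 a10 a11 a12 a20 a21 a22 b00 b01 b02 b10 b11 b12 b20 b21 b22 :
  a00 = b00 -> a01 = b01 -> a02 = b02 -> a10 = b10 -> a11 = b11 -> a12 = b12 ->
  a20 = b20 -> a21 = b21 -> a22 = b22 ->
  mk3 a00 a01 a02 a10 a11 a12 a20 a21 a22 = mk3 b00 b01 b02 b10 b11 b12 b20 b21 b22.
Proof. by move=> -> -> -> -> -> -> -> -> ->. Qed.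

Lemma XmatE (g : R) : Xmat g = mk3 0 (sin g ^+ 2) (sin g * cos g) (- sin g ^+ 2) 0 0
   (- (sin g * cos g)) 0 0.
Proof. by cases9; rewrite !mxE. Qed.

Lemma YmatE : Ymat = mk3 0 1 0 (-1) 0 0 0 0 0 :> 'M[R]_3.
Proof. by cases9; rewrite !mxE. Qed.

Ltac solve3 := rewrite ?XmatE ?YmatE ?(mulmk3, submk3, sclmk3); apply: eqmk3.

Lemma lieF3Y (g : R) : lie (F3 g) Ymat = F2 g.
Proof. rewrite /F3 /F2 /lie; solve3; ring. Qed.

Lemma lieF3X (g : R) : lie (F3 g) (Xmat g) = (sin g ^+ 2) *: F2 g.
Proof. rewrite /F3 /F2 /lie; solve3; ring. Qed.

Lemma lieF2X (g : R) : lie (F2 g) (Xmat g) = - (sin g ^+ 2) *: F1 g.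
Proof.
have h : sin g ^+ 2 * (sin g ^+ 2 + cos g ^+ 2) = sin g ^+ 2.
  by rewrite addrC cos2Dsin2 mulr1.
rewrite /F1 /F2 /lie; solve3; try ring; nra.
Qed.


Lemma my_cvg_sum (T : Type) (F : set_system T) (FF : Filter F) (I : Type) (r : seq I)
  (f : I -> T -> R) (a : I -> R) :
  (forall i, f i x @[x --> F] --> a i) ->
  \sum_(i <- r) f i x @[x --> F] --> \sum_(i <- r) a i.
Proof.
move=> h; elim: r => [|i r IH].
  under eq_cvg do rewrite big_nil.
  rewrite big_nil; exact: cvg_cst.
under eq_cvg do rewrite big_cons.
rewrite big_cons; exact: cvgD.
Qed.

Lemma phi_cont0 (F : 'M[R]_3) (p psi : R -> 'cV[R]_3) :
  psi x @[x --> 0^'+] --> psi 0 -> p x @[x --> 0^'+] --> p 0 ->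
  phi F p psi x @[x --> 0^'+] --> phi F p psi 0.
Proof.
move=> hs hp.
have cs j : psi x j 0 @[x --> 0^'+] --> psi 0 j 0.
  exact: (continuous_cvg _ (@coord_continuous R 3 1 j 0 (psi 0)) hs).
have cp i : p x i 0 @[x --> 0^'+] --> p 0 i 0.
  exact: (continuous_cvg _ (@coord_continuous R 3 1 i 0 (p 0)) hp).
rewrite /phi phiE.
under eq_cvg do rewrite phiE.
apply: my_cvg_sum => i; apply: my_cvg_sum => j.
apply: cvgM; first exact: cvg_cst.
exact: cvgM.
Qed.

Lemma phiZ (k : R) (F : 'M[R]_3) (p psi : R -> 'cV[R]_3) t :
  phi (k *: F) p psi t = k * phi F p psi t.
Proof.
rewrite /phi !phiE big_distrr; apply: eq_bigr => i _.
rewrite big_distrr; apply: eq_bigr => j _; by rewrite mxE -mulrA.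
Qed.

Lemma phiN (F : 'M[R]_3) (p psi : R -> 'cV[R]_3) t :
  phi (- F) p psi t = - phi F p psi t.
Proof. by rewrite -scaleN1r phiZ mulN1r. Qed.
End Aux.

Theorem mainTheorem8 (R : realType) (g a b : R) (A : 'M[R]_3)
  (psi p : R -> 'cV[R]_3) (tau : R) :
  0 < g -> g < pi / 2 ->
  a != 0 ->
  (A = Xmat g \/ A = Ymat) ->
  (* the ODEs hold for t > 0, with right-continuity at t = 0 *)
  (forall t : R, 0 < t -> is_derive t 1 psi (A *m psi t)) ->
  (forall t : R, 0 < t -> is_derive t 1 p (- (A^T *m p t))) ->
  psi x @[x --> 0^'+] --> psi 0 ->
  p x @[x --> 0^'+] --> p 0 ->
  (* reduced initial data (0, a, b) *)
  phi (F1 g) p psi 0 = 0 ->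
  phi (F2 g) p psi 0 = a ->
  phi (F3 g) p psi 0 = b ->
  (* tau is the smallest positive zero of phi_1 *)
  0 < tau ->
  phi (F1 g) p psi tau = 0 ->
  (forall t : R, 0 < t < tau -> phi (F1 g) p psi t != 0) ->
  [/\ phi (F1 g) p psi tau = 0,
      phi (F2 g) p psi tau = - a &
      phi (F3 g) p psi tau = b].
Proof.
move=> g0 gpi a0 hA hs hp cs cp e1 e2 e3 tau0 e1t hz.
set f1 := phi (F1 g) p psi.
set f2 := phi (F2 g) p psi.
set f3 := phi (F3 g) p psi.
have E1 : f1 tau = 0 := e1t.
have E10 : f1 0 = 0 := e1.
have E20 : f2 0 = a := e2.
have E30 : f3 0 = b := e3.
have D (F : 'M[R]_3) (t : R) : 0 < t -> is_derive t 1 (phi F p psi) (phi (lie F A) p psi t).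
  by move=> ht; apply: derive_phi; [exact: hs | exact: hp].
have C (F : 'M[R]_3) := @phi_cont0 R F p psi cs cp.
have d1 (t : R) : 0 < t -> is_derive t 1 f1 (f2 t).
  by move=> ht; have := D (F1 g) t ht; rewrite (@lieF1 R g A hA).
have dv (F : 'M[R]_3) (t : R) : 0 < t -> derivable (phi F p psi) t 1.
  by move=> ht; case: (D F t ht).
have notA : f2 tau <> a.
  move=> h; apply: (@sign_contra R f1 f2 a tau) => //.
  - exact: dv.
  - exact: C.
  - exact: C.
suff [sq e3t] : f2 tau ^+ 2 = a ^+ 2 /\ f3 tau = b.
  split => //.
  move/eqP: sq; rewrite eqf_sqr => /orP[/eqP h|/eqP h] //.
set s2 := sin g ^+ 2.
case: hA => hA; subst A.
- have d2 (t : R) : 0 < t -> is_derive t 1 f2 (- s2 * f1 t).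
    by move=> ht; have := D (F2 g) t ht; rewrite lieF2X phiZ.
  have d3 (t : R) : 0 < t -> is_derive t 1 f3 (s2 * f2 t).
    by move=> ht; have := D (F3 g) t ht; rewrite lieF3X phiZ.
  pose Q := fun t => f2 t * f2 t + s2 * (f1 t * f1 t).
  have dQ (t : R) : 0 < t -> is_derive t 1 Q 0.
    move=> ht.
    have H := is_deriveD (is_deriveM (d2 t ht) (d2 t ht))
                (is_deriveZ s2 (is_deriveM (d1 t ht) (d1 t ht))).
    apply: (is_derive_eq H); rewrite /GRing.scale /=; ring.
  have cQ : Q x @[x --> 0^'+] --> Q 0.
    apply: cvgD; first by apply: cvgM; exact: C.
    apply: cvgM; first exact: cvg_cst.
    by apply: cvgM; exact: C.
  have eQ := @const0 R _ _ dQ cQ tau0.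
  pose H := fun t => f3 t + (- s2) * f1 t.
  have dH (t : R) : 0 < t -> is_derive t 1 H 0.
    move=> ht.
    have H0 := is_deriveD (d3 t ht) (is_deriveZ (- s2) (d1 t ht)).
    apply: (is_derive_eq H0); rewrite /GRing.scale /=; ring.
  have cH : H x @[x --> 0^'+] --> H 0.
    apply: cvgD; first exact: C.
    apply: cvgM; first exact: cvg_cst.
    exact: C.
  have eH := @const0 R _ _ dH cH tau0.
  move: eQ eH; rewrite /Q /H E1 E10 E20 E30 => eQ eH.
  split; [rewrite !expr2 |]; lra.
- have d2 (t : R) : 0 < t -> is_derive t 1 f2 (- f3 t).
    by move=> ht; have := D (F2 g) t ht; rewrite lieF2Y phiN.
  have d3 (t : R) : 0 < t -> is_derive t 1 f3 (f2 t).
    by move=> ht; have := D (F3 g) t ht; rewrite lieF3Y.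
  pose Q := fun t => f2 t * f2 t + f3 t * f3 t.
  have dQ (t : R) : 0 < t -> is_derive t 1 Q 0.
    move=> ht.
    have H := is_deriveD (is_deriveM (d2 t ht) (d2 t ht))
                (is_deriveM (d3 t ht) (d3 t ht)).
    apply: (is_derive_eq H); rewrite /GRing.scale /=; ring.
  have cQ : Q x @[x --> 0^'+] --> Q 0.
    apply: cvgD; first by apply: cvgM; exact: C.
    by apply: cvgM; exact: C.
  have eQ := @const0 R _ _ dQ cQ tau0.
  pose H := fun t => f3 t + (- 1) * f1 t.
  have dH (t : R) : 0 < t -> is_derive t 1 H 0.
    move=> ht.
    have H0 := is_deriveD (d3 t ht) (is_deriveZ (- 1) (d1 t ht)).
    apply: (is_derive_eq H0); rewrite /GRing.scale /=; ring.
  have cH : H x @[x --> 0^'+] --> H 0.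
    apply: cvgD; first exact: C.
    apply: cvgM; first exact: cvg_cst.
    exact: C.
  have eH := @const0 R _ _ dH cH tau0.
  move: eQ eH; rewrite /Q /H E1 E10 E20 E30 => eQ eH.
  have e3t : f3 tau = b by lra.
  split => //.
  rewrite e3t in eQ; rewrite !expr2; lra.
Qed.
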